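(* The convolution $(g_1\ast g_2)(A)=\min_{B\subseteq A}\,[g_1(B)+g_2(A\setminus B)]$ of two submodular functions $g_1,g_2$ is not in general submodular. In particular, there exist a directed graph $\mathcal{G}=(\mathcal{V},\mathcal{E})$ and a normalized monotone nondecreasing submodular $f:2^{\mathcal{E}}\to\mathbb{R}_+$ such that, with $\mathrm{cap}^{\mathrm{out}}(A)=\sum_{v\in\mathcal{V}}f(A\cap\delta^+(v))$ and $\mathrm{cap}^{\mathrm{in}}(A)=\sum_{v\in\mathcal{V}}f(A\cap\delta^-(v))$, the function $h=\mathrm{cap}^{\mathrm{out}}\ast\mathrm{cap}^{\mathrm{in}}$ (the cut cost function of the dual of the corresponding polymatroidal maximum flow) is not submodular.
   Context: $\delta^+(v)$ and $\delta^-(v)$ denote the sets of edges leaving and entering node $v$. A set function $g$ on $2^{\mathcal{E}}$ is submodular if $g(A)+g(B)\ge g(A\cup B)+g(A\cap B)$ for all $A,B\subseteq\mathcal{E}$. *)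

(* Defs.v *)
From HB Require Import structures.
From mathcomp Require Import all_boot all_order all_algebra.
Set Implicit Arguments. Unset Strict Implicit. Unset Printing Implicit Defensive.
Import Order.TTheory GRing.Theory Num.Theory.
Local Open Scope ring_scope.

Section Defs.
Variable R : realFieldType.

Definition submodular (T : finType) (g : {set T} -> R) : Prop :=
  forall A B : {set T}, g (A :|: B) + g (A :&: B) <= g A + g B.
Definition normalized (T : finType) (g : {set T} -> R) : Prop := g set0 = 0.
Definition monotone_nondecr (T : finType) (g : {set T} -> R) : Prop :=
  forall A B : {set T}, A \subset B -> g A <= g B.
Definition nonnegative (T : finType) (g : {set T} -> R) : Prop :=
  forall A : {set T}, 0 <= g A.

(* Convolution (g1 * g2)(A) = min_{B subset A} [g1 B + g2 (A \ B)].
   The fold's default value is the B = set0 term, which is itself in the range,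
   so this is exactly the minimum. *)
Definition convolution (T : finType) (g1 g2 : {set T} -> R) (A : {set T}) : R :=
  \big[Num.min/g1 set0 + g2 A]_(B in powerset A) (g1 B + g2 (A :\: B)).

Definition delta_out (V E : finType) (src : E -> V) (v : V) : {set E} :=
  [set e | src e == v].
Definition delta_in (V E : finType) (dst : E -> V) (v : V) : {set E} :=
  [set e | dst e == v].

Definition cap_out (V E : finType) (src : E -> V) (f : {set E} -> R)
  (A : {set E}) : R := \sum_(v : V) f (A :&: delta_out src v).
Definition cap_in (V E : finType) (dst : E -> V) (f : {set E} -> R)
  (A : {set E}) : R := \sum_(v : V) f (A :&: delta_in dst v).
End Defs.

(* Main.v *)
Require Import Defs.
From HB Require Import structures.
From mathcomp Require Import all_boot all_order all_algebra.
Import Order.TTheory GRing.Theory Num.Theory.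
Local Open Scope ring_scope.

Definition va : 'I_4 := @Ordinal 4 0 isT.
Definition vb : 'I_4 := @Ordinal 4 1 isT.
Definition vc : 'I_4 := @Ordinal 4 2 isT.
Definition vd : 'I_4 := @Ordinal 4 3 isT.
Definition e0 : 'I_3 := @Ordinal 3 0 isT.
Definition e1 : 'I_3 := @Ordinal 3 1 isT.
Definition e2 : 'I_3 := @Ordinal 3 2 isT.
Definition srcE (e : 'I_3) : 'I_4 := if val e == 0%N then va else vc.
Definition dstE (e : 'I_3) : 'I_4 := if val e == 2%N then vd else vb.

Definition nz {T : finType} (X : {set T}) : nat := (X != set0).

Lemma L1 (S : 'I_4 -> {set 'I_3}) (X : {set 'I_3}) x v :
  x \in X -> x \in S v -> (1 <= \sum_(w : 'I_4) nz (X :&: S w))%N.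
Proof.
move=> hx hs; rewrite (bigD1 v) //= /nz.
have -> : (X :&: S v != set0) by apply/set0Pn; exists x; rewrite inE hx hs.
by [].
Qed.

Lemma L2 (S : 'I_4 -> {set 'I_3}) (X : {set 'I_3}) x v y w :
  x \in X -> x \in S v -> y \in X -> y \in S w -> v != w ->
  (2 <= \sum_(u : 'I_4) nz (X :&: S u))%N.
Proof.
move=> hx hs hy hw vw; rewrite (bigD1 v) //= (bigD1 w) /=; last by rewrite eq_sym.
rewrite /nz.
have -> : (X :&: S v != set0) by apply/set0Pn; exists x; rewrite inE hx hs.
have -> : (X :&: S w != set0) by apply/set0Pn; exists y; rewrite inE hy hw.
by [].
Qed.

Lemma U1 (S : 'I_4 -> {set 'I_3}) (X : {set 'I_3}) w :
  (forall v, v != w -> X :&: S v = set0) -> (\sum_(u : 'I_4) nz (X :&: S u) <= 1)%N.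
Proof.
move=> H; rewrite (bigD1 w) //= big1; last by move=> v vw; rewrite /nz H // eqxx.
by rewrite addn0 /nz; case: (_ != _).
Qed.

Arguments L1 {S X x v}.
Arguments L2 {S X x v y w}.
Arguments U1 {S X} w.

Section Conv.
Variables (R : realFieldType) (T : finType) (g1 g2 : {set T} -> R).
Lemma conv_le (A B : {set T}) : B \subset A -> convolution g1 g2 A <= g1 B + g2 (A :\: B).
Proof.
move=> h; rewrite /convolution (bigD1 B) /=; last by rewrite powersetE.
by rewrite ge_min lexx.
Qed.
Lemma conv_ge (A : {set T}) (c : R) : (forall B : {set T}, B \subset A -> c <= g1 B + g2 (A :\: B)) ->
  c <= convolution g1 g2 A.
Proof.
move=> H; rewrite /convolution; apply: (big_ind (fun x => c <= x)).
- by have := H set0 (sub0set A); rewrite setD0.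
- by move=> x y hx hy; rewrite le_min hx hy.
- by move=> B; rewrite powersetE; apply: H.
Qed.
End Conv.
Arguments conv_le {R T} g1 g2 {A B}.
Arguments conv_ge {R T} g1 g2 {A c}.

Theorem proposition2 (R : realFieldType) :
  exists (V E : finType) (src dst : E -> V) (f : {set E} -> R),
    injective (fun e => (src e, dst e)) /\
    normalized f /\ monotone_nondecr f /\ nonnegative f /\ submodular f /\
    ~ submodular (convolution (cap_out src f) (cap_in dst f)).
Proof.
pose f := fun X : {set 'I_3} => (nz X)%:R : R.
have capo : forall A, cap_out srcE f A = (\sum_v nz (A :&: delta_out srcE v))%:R.
  by move=> A; rewrite natr_sum.
have capi : forall A, cap_in dstE f A = (\sum_v nz (A :&: delta_in dstE v))%:R.
  by move=> A; rewrite natr_sum.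
exists 'I_4, 'I_3, srcE, dstE, f.
split.
  move=> [x hx] [y hy] H; apply: val_inj => /=.
  move: x y hx hy H => [|[|[|x]]] [|[|[|y]]] //= hx hy; move/eqP => //.
split; first by rewrite /normalized /f /nz eqxx.
split.
  move=> A B sAB; rewrite /f ler_nat /nz.
  case: (set0Pn A) => [[x hx]|//].
  by have -> : B != set0 by apply/set0Pn; exists x; apply: (subsetP sAB).
split; first by move=> A; rewrite /f ler0n.
split.
  move=> A B; rewrite /f -!natrD ler_nat /nz.
  have hU : (A :|: B != set0) = (A != set0) || (B != set0) by rewrite setU_eq0 negb_and.
  have hI : (A :&: B != set0) -> (A != set0) && (B != set0).
    case/set0Pn => x; rewrite inE => /andP[xa xb]; apply/andP; split; apply/set0Pn; by exists x.
  rewrite hU; move: hI; case: (A :&: B != set0); case: (A != set0); case: (B != set0) => //= /(_ isT) //.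
move=> H.
have := H [set e0; e1] [set e1; e2].
set h := convolution _ _.
have mo : forall e v, (e \in delta_out srcE v) = (srcE e == v) by move=> e v; rewrite inE.
have mi : forall e v, (e \in delta_in dstE v) = (dstE e == v) by move=> e v; rewrite inE.
have Z : forall (S : 'I_4 -> {set 'I_3}), (\sum_(u : 'I_4) nz (set0 :&: S u) = 0)%N.
  by move=> S; rewrite big1 // => u _; rewrite set0I /nz eqxx.
have hA : h [set e0; e1] <= 1.
  apply: le_trans (conv_le _ _ (sub0set _)) _.
  rewrite capo capi -natrD -[X in _ <= X]mulr1n ler_nat Z add0n setD0.
  apply: (U1 vb) => v hv; apply/setP => -[[|[|[|e]]] he] //; rewrite !inE /= /dstE /=;
    by rewrite // eq_sym (negbTE hv).
have hB : h [set e1; e2] <= 1.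
  apply: le_trans (conv_le _ _ (subxx _)) _.
  rewrite capo capi -natrD -[X in _ <= X]mulr1n ler_nat setDv Z addn0.
  apply: (U1 vc) => v hv; apply/setP => -[[|[|[|e]]] he] //; rewrite !inE /= /srcE /=;
    by rewrite // eq_sym (negbTE hv).
have hU : 2 <= h ([set e0; e1] :|: [set e1; e2]).
  apply: conv_ge => C _; rewrite capo capi -natrD ler_nat.
  case h0: (e0 \in C); case h2: (e2 \in C).
  - apply: leq_trans (leq_addr _ _); apply: (L2 (x:=e0) (v:=va) (y:=e2) (w:=vc)) => //; by rewrite mo.
  - apply: (@leq_add 1 1); [apply: (L1 (x:=e0) (v:=va)) | apply: (L1 (x:=e2) (v:=vd))];
      by rewrite ?mo ?mi // !inE h2.
  - apply: (@leq_add 1 1); [apply: (L1 (x:=e2) (v:=vc)) | apply: (L1 (x:=e0) (v:=vb))];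
      by rewrite ?mo ?mi // !inE h0.
  - apply: leq_trans (leq_addl _ _); apply: (L2 (x:=e0) (v:=vb) (y:=e2) (w:=vd));
      by rewrite ?mi // !inE ?h0 ?h2.
have hI : 1 <= h ([set e0; e1] :&: [set e1; e2]).
  apply: conv_ge => C _; rewrite capo capi -natrD -[X in X <= _]mulr1n ler_nat.
  case h1: (e1 \in C).
  - apply: leq_trans (leq_addr _ _); apply: (L1 (x:=e1) (v:=vc)); by rewrite ?mo.
  - apply: leq_trans (leq_addl _ _); apply: (L1 (x:=e1) (v:=vb)); by rewrite ?mi // !inE h1.
move=> K.
have := le_trans (lerD hU hI) K.
have := lerD hA hB.
move=> a b; have := le_trans b a.
by rewrite -[1 in X in X -> _]mulr1n -!natrD ler_nat.
Qed.
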